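(* Let $\odot$ be a pseudo-multiplication on $[0,\infty]$ with left identity $1_{\odot}$, and let $F_{\odot}$ be the set of $\odot$-finite elements. The following conditions are equivalent: (1) $\odot$ is non-degenerate, i.e. $1_{\odot}$ is $\odot$-finite; (2) there exists some $t>0$ that is $\odot$-finite; (3) the monoid $([0,1_{\odot}],\odot)$ is commutative; (4) $F_{\odot}$ is either $[0,\infty]$ or of the form $[0,\phi)$ for some $\phi\in(1_{\odot},\infty]$. Moreover, if $F_{\odot}=[0,\phi)$, then $O(\phi)=\phi$ and $t\odot\phi=\phi\odot t=\phi$ for all $0<t\leqslant\phi$; in particular $\phi\odot\phi=\phi$.
   Context: A pseudo-multiplication is a binary operation $\odot:[0,\infty]\times[0,\infty]\to[0,\infty]$ such that: $\odot$ is associative; $\odot$ is continuous on $(0,\infty)\times[0,\infty]$; for every $t$, the map $s\mapsto s\odot t$ is continuous on $(0,\infty]$; $\odot$ is nondecreasing in each argument; there is a left identity element $1_{\odot}$, i.e. $1_{\odot}\odot t=t$ for all $t$; there are no zero divisors, i.e. $s\odot t=0$ implies $s=0$ or $t=0$; and $0$ is an annihilator, i.e. $0\odot t=t\odot 0=0$ for all $t$. For $t\in[0,\infty]$ put $O(t)=\inf_{s>0} s\odot t$. An element $t$ is called $\odot$-finite if $O(t)=0$, and $\odot$-infinite otherwise. The pseudo-multiplication $\odot$ is called non-degenerate if $O(1_{\odot})=0$. *)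

(* Defs.v *)
From HB Require Import structures.
From mathcomp Require Import all_boot all_order all_algebra.
From mathcomp Require Import all_classical all_reals all_analysis.
Set Implicit Arguments. Unset Strict Implicit. Unset Printing Implicit Defensive.
Import Order.TTheory GRing.Theory Num.Theory.
Local Open Scope classical_set_scope.
Local Open Scope ereal_scope.

Definition nnE (R : realType) : set (\bar R) := [set x | 0 <= x].

(* A pseudo-multiplication on [0,oo] (values outside [0,oo] are irrelevant)
   with left identity [one]. *)
Record is_pseudo_mult (R : realType) (op : \bar R -> \bar R -> \bar R)
    (one : \bar R) : Prop := IsPseudoMult {
  pm_range : forall s t, 0 <= s -> 0 <= t -> 0 <= op s t;
  pm_assoc : forall s t u, 0 <= s -> 0 <= t -> 0 <= u ->
    op (op s t) u = op s (op t u);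
  pm_cont : {within [set p : \bar R * \bar R | 0 < p.1 < +oo /\ 0 <= p.2],
         continuous (fun p : \bar R * \bar R => op p.1 p.2)};
  pm_cont_left : forall t, 0 <= t ->
    {within [set s : \bar R | 0 < s], continuous (fun s => op s t)};
  pm_mono_l : forall s s' t, 0 <= s -> s <= s' -> 0 <= t -> op s t <= op s' t;
  pm_mono_r : forall s t t', 0 <= s -> 0 <= t -> t <= t' -> op s t <= op s t';
  pm_one_ge0 : 0 <= one;
  pm_one_l : forall t, 0 <= t -> op one t = t;
  pm_nozd : forall s t, 0 <= s -> 0 <= t -> op s t = 0 -> s = 0 \/ t = 0;
  pm_0l : forall t, 0 <= t -> op 0 t = 0;
  pm_0r : forall t, 0 <= t -> op t 0 = 0 }.

Definition Ofun (R : realType) (op : \bar R -> \bar R -> \bar R) (t : \bar R) : \bar R :=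
  ereal_inf [set op s t | s in [set s : \bar R | 0 < s]].

Definition odot_finite (R : realType) (op : \bar R -> \bar R -> \bar R) : set (\bar R) :=
  [set t | 0 <= t /\ Ofun op t = 0].

(* Main.v *)
Require Import Defs.
From HB Require Import structures.
From mathcomp Require Import all_boot all_order all_algebra.
From mathcomp Require Import all_classical all_reals all_analysis.
From mathcomp Require Import ring lra.
Import Order.TTheory GRing.Theory Num.Theory.
Local Open Scope classical_set_scope.
Local Open Scope ereal_scope.

Lemma nbhs_below (R : realType) (P : set (\bar R)) (c : \bar R) :
  0 < c -> nbhs c P -> exists u, 0 < u < c /\ u < +oo /\ P u.
Proof.
case: c => [r||] //= r0.
- rewrite lte_fin in r0 => /nbhs_EFin Pr.
  have : \forall y \near r^'-, (0 < y)%R /\ (y < r)%R /\ P y%:E.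
    near=> y; split; [near: y; exact: nbhs_left_gt|split; [near: y; exact: nbhs_left_lt|]].
    near: y; apply: cvg_within; exact: Pr.
  move=> /filter_ex[y [y0 [yr Py]]]; exists y%:E; rewrite !lte_fin y0 yr ltry; split => //.
- move=> /nbhs_ereal_pinfty[_ [M [Mr HM]]].
  have h1 : (M <= Num.max M 0)%R by rewrite le_max lexx.
  have h2 : (0 <= Num.max M 0)%R by rewrite le_max lexx orbT.
  exists (Num.max M 0 + 1)%:E; split; [|split; [exact: ltry|apply: HM]].
  + rewrite lte_fin ltry andbT. lra.
  + lra.
Unshelve. all: by end_near.
Qed.

Lemma nbhs_above (R : realType) (P : set (\bar R)) (r : R) :
  nbhs r%:E P -> exists u, r%:E < u < +oo /\ P u.
Proof.
move=> /nbhs_EFin Pr.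
have : \forall y \near r^'+, (r < y)%R /\ P y%:E.
  near=> y; split; [near: y; exact: nbhs_right_gt|].
  near: y; apply: cvg_within; exact: Pr.
move=> /filter_ex[y [yr Py]]; exists y%:E; rewrite !lte_fin yr ltry; split => //.
Unshelve. all: by end_near.
Qed.

Section PM.
Context (R : realType) (op : \bar R -> \bar R -> \bar R) (one : \bar R)
  (H : is_pseudo_mult op one).

Lemma L1 t c y : 0 <= t -> 0 < c -> y < op c t ->
  exists u, 0 < u < c /\ u < +oo /\ y < op u t.
Proof.
move=> t0 c0 yc.
have := @pm_cont_left R op one H t t0 c _ (open_ereal_gt' yc).
move=> h.
have : within [set s | 0 < s] (nbhs c) [set u | y < op u t].
  by rewrite nbhs_subspace_in //; exact: h.
move=> /nbhs_below[//|u [uc [uoo Pu]]].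
exists u; split => //; split => //; apply: Pu; by case/andP: uc.
Qed.
Lemma R1 t c y : 0 <= t -> 0 < c -> c < +oo -> op c t < y ->
  exists u, c < u < +oo /\ y > op u t.
Proof.
move=> t0 c0 coo yc.
have := @pm_cont_left R op one H t t0 c _ (open_ereal_lt' yc).
move=> h.
have : within [set s | 0 < s] (nbhs c) [set u | op u t < y].
  by rewrite nbhs_subspace_in //; exact: h.
case: c c0 coo {yc h} => [r||] //= c0 _ /nbhs_above[u [uc Pu]].
exists u; split => //; apply: Pu. case/andP: uc => /(lt_trans c0) //.
Qed.
Lemma cont2 s c (Q : set (\bar R)) : 0 < s < +oo -> 0 <= c ->
  nbhs (op s c) Q -> nbhs c (fun v => 0 <= v -> Q (op s v)).
Proof.
move=> s0 c0 hQ.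
have := @pm_cont R op one H (s, c) _ hQ => h.
have : within [set p : \bar R * \bar R | 0 < p.1 < +oo /\ 0 <= p.2] (nbhs (s, c))
   [set p | Q (op p.1 p.2)].
  by rewrite nbhs_subspace_in //; exact: h.
move=> h2.
have hp : (fun v => (s, v)) @ nbhs c --> (s, c).
  by apply: cvg_pair; [exact: cvg_cst|exact: cvg_id].
have := hp _ h2.
move=> h3.
have h4 : nbhs c (fun v => (0 < s < +oo /\ 0 <= v) -> Q (op s v)) := h3.
by apply: filterS h4 => v hv v0; apply: hv; split.
Qed.
Lemma L2 s c y : 0 < s < +oo -> 0 < c -> y < op s c ->
  exists v, 0 < v < c /\ v < +oo /\ y < op s v.
Proof.
move=> s0 c0 yc.
have := @cont2 s c _ s0 (ltW c0) (open_ereal_gt' yc).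
move=> /nbhs_below[//|v [vc [voo Pv]]].
exists v; split => //; split => //; apply: Pv; case/andP: vc => /ltW //.
Qed.

Lemma R2 s c y : 0 < s < +oo -> 0 <= c -> c < +oo -> op s c < y ->
  exists v, c < v < +oo /\ y > op s v.
Proof.
move=> s0 c0 coo yc.
have := @cont2 s c _ s0 c0 (open_ereal_lt' yc).
case: c c0 coo {yc} => [r||] //= c0 _ /nbhs_above[v [vc Pv]].
exists v; split => //; apply: Pv. case/andP: vc => /ltW /(le_trans c0) //.
Qed.
Local Notation O := (Ofun op).
Lemma one_gt0 : 0 < one.
Proof.
have := pm_one_ge0 H; rewrite le_eqVlt => /orP[/eqP e|//].
have := pm_one_l H (@lee01 R); rewrite -e (pm_0l H) ?lee01 //.
by move=> /eqP; rewrite eq_sym onee_eq0.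
Qed.
Lemma O_lb s t : 0 < s -> O t <= op s t.
Proof. by move=> s0; apply: ereal_inf_lbound; exists s.
Qed.

Lemma O_glb y t : (forall s, 0 < s -> y <= op s t) -> y <= O t.
Proof. by move=> h; apply: le_ereal_inf_tmp => _ [s s0 <-]; apply: h.
Qed.

Lemma O_lt y t : O t < y -> exists s, 0 < s /\ op s t < y.
Proof. by move=> /ereal_inf_lt[_ [s s0 <-] h]; exists s.
Qed.

Lemma O_ge0 t : 0 <= t -> 0 <= O t.
Proof. by move=> t0; apply: O_glb => s s0; apply: (pm_range H (ltW s0) t0).
Qed.

Lemma O_le t : 0 <= t -> O t <= t.
Proof. by move=> t0; rewrite -{2}(pm_one_l H t0); apply: O_lb; exact: one_gt0.
Qed.
Lemma O_mono t t' : 0 <= t -> t <= t' -> O t <= O t'.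
Proof.
move=> t0 tt; apply: O_glb => s s0; apply: le_trans (@O_lb s t s0) _.
by apply: (pm_mono_r H (ltW s0) t0 tt).
Qed.
Lemma le0E (x : \bar R) : 0 <= x -> (forall r : R, (0 < r)%R -> x < r%:E) -> x = 0.
Proof.
case: x => [r||] //= r0 h.
- apply/eqP; rewrite eqe; apply/negPn/negP => rn0.
  have rp : (0 < r)%R by rewrite lt_def rn0 -lee_fin.
  have := h (r / 2)%R; rewrite lte_fin; have : (0 < r / 2)%R by lra.
  move=> /[swap] /[apply]; lra.
- by have := h 1%R ltr01.
Qed.

Lemma pos_mul s t : 0 < s -> 0 < t -> 0 < op s t.
Proof.
move=> s0 t0; rewrite lt_def (pm_range H (ltW s0) (ltW t0)) andbT.
apply/eqP => /(pm_nozd H (ltW s0) (ltW t0)) [] e.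
  by move: s0; rewrite e ltxx.
by move: t0; rewrite e ltxx.
Qed.

Lemma finite_mul s t : 0 <= s -> 0 <= t -> O s = 0 -> O t = 0 -> O (op s t) = 0.
Proof.
move=> s0 t0 Os Ot; apply: le0E; first exact/O_ge0/(pm_range H).
move=> r r0.
have [a [a0 ha]] : exists a, 0 < a /\ op a t < r%:E by apply: O_lt; rewrite Ot lte_fin.
have [u [u0 hu]] : exists u, 0 < u /\ op u s < a by apply: O_lt; rewrite Os.
apply: le_lt_trans (@O_lb u _ u0) _.
rewrite -(pm_assoc H (ltW u0) s0 t0).
apply: le_lt_trans ha; apply: (pm_mono_l H) => //; last exact: ltW.
exact: (pm_range H (ltW u0) s0).
Qed.
Lemma O_fix t s : 0 <= t -> 0 < s -> O t <= op s (O t).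
Proof.
move=> t0 s0.
have c0 := @O_ge0 t t0.
have key : forall s', 0 < s' -> O t <= op s (op s' t).
  move=> s' s'0; rewrite -(pm_assoc H (ltW s0) (ltW s'0) t0).
  exact/O_lb/pos_mul.
have [soo|soo] := leP +oo s.
  have -> : s = +oo by apply/eqP; rewrite eq_le leey soo.
  apply: le_trans (_ : op one (O t) <= _).
    by rewrite (pm_one_l H c0).
  by apply: (pm_mono_l H); [exact: ltW one_gt0|exact: leey|].
have [coo|coo] := leP +oo (O t).
  have ct : O t = +oo by apply/eqP; rewrite eq_le leey coo.
  have tt : t = +oo by apply/eqP; rewrite eq_le leey -ct O_le.
  rewrite {2}ct -tt -{2}(pm_one_l H t0); apply: key; exact: one_gt0.
rewrite leNgt; apply/negP => hc.
have [v [/andP[cv voo] hv]] := @R2 s (O t) (O t) (ltac:(by rewrite s0 soo)) c0 coo hc.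
have [s' [s'0 hs']] := @O_lt v t cv.
have h1 : op s (op s' t) <= op s v.
  apply: (pm_mono_r H (ltW s0)); [exact: (pm_range H (ltW s'0) t0)|exact: ltW].
have h2 := key s' s'0.
by have := le_lt_trans (le_trans h2 h1) hv; rewrite ltxx.
Qed.
Local Notation F := (odot_finite op).

Lemma O_idem t : 0 <= t -> O (O t) = O t.
Proof.
move=> t0; apply/eqP; rewrite eq_le (@O_le (O t) (@O_ge0 t t0)) /=.
by apply: O_glb => s s0; apply: O_fix.
Qed.

Lemma F_down x y : 0 <= x -> x <= y -> F y -> F x.
Proof.
move=> x0 xy [y0 Oy]; split => //; apply/eqP; rewrite eq_le O_ge0 // andbT.
by rewrite -Oy; apply: O_mono.
Qed.

Lemma notF_gt x y : 0 <= x -> ~ F x -> F y -> y < x.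
Proof. by move=> x0 nFx Fy; rewrite ltNge; apply/negP => xy; apply: nFx; apply: F_down Fy.
Qed.

Lemma OnotF t : 0 <= t -> ~ F t -> ~ F (O t).
Proof. by move=> t0 nF [_ h]; apply: nF; split => //; rewrite -h O_idem.
Qed.

Lemma F0 : F 0.
Proof. by split => //; apply/eqP; rewrite eq_le O_ge0 // andbT O_le.
Qed.
Lemma moreover_part phi : F = [set t | 0 <= t < phi] ->
  [/\ O phi = phi,
      (forall t, 0 < t <= phi -> op t phi = phi /\ op phi t = phi) &
      op phi phi = phi].
Proof.
move=> hF.
have hx x : F x <-> 0 <= x < phi by rewrite hF.
have phi0 : 0 < phi by have /hx/andP[] := F0.
have nFphi : ~ F phi by move/hx; rewrite ltxx andbF.
have phige0 := ltW phi0.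
have Ophi : O phi = phi.
  apply/eqP; rewrite eq_le O_le //=.
  have := @OnotF phi phige0 nFphi; rewrite hx O_ge0 //= => /negP; rewrite -leNgt //.
have lbphi s : 0 < s -> phi <= op s phi by move=> s0; rewrite -{1}Ophi; apply: O_lb.
have tphi t : 0 < t < phi -> op t phi = phi.
  move=> /andP[t0 tp]; apply/eqP; rewrite eq_le lbphi // andbT.
  have [poo|poo] := leP +oo phi; first by apply: le_trans (leey _) poo.
  rewrite leNgt; apply/negP => hc.
  have [v [/andP[v0 vp] [voo hv]]] := @L2 t phi phi (ltac:(by rewrite t0 (lt_trans tp poo))) phi0 hc.
  have Fv : F v by apply/hx; rewrite (ltW v0) vp.
  have Ft : F t by apply/hx; rewrite (ltW t0) tp.
  have Otv := @finite_mul t v (ltW t0) (ltW v0) Ft.2 Fv.2.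
  have : F (op t v) by split => //; exact: (pm_range H (ltW t0) (ltW v0)).
  by move/hx => /andP[_ /(lt_trans hv)]; rewrite ltxx.
have phiphi : op phi phi = phi.
  apply/eqP; rewrite eq_le lbphi // andbT.
  rewrite leNgt; apply/negP => hc.
  have [u [/andP[u0 up] [uoo hu]]] := @L1 phi phi phi phige0 phi0 hc.
  by move: hu; rewrite tphi ?u0 ?up // ltxx.
split => //.
move=> t /andP[t0 tp]; split.
  have [tp'|tp'] := ltP t phi; first by apply: tphi; rewrite t0 tp'.
  by have -> : t = phi by apply/eqP; rewrite eq_le tp tp'.
apply/eqP; rewrite eq_le; apply/andP; split.
  by rewrite -{2}phiphi; apply: (pm_mono_r H) => //; exact: ltW.
have pt0 := @pos_mul phi t phi0 t0.
have nF : ~ F (op phi t).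
  move=> [_ h0].
  have : op phi t <= O (op phi t).
    apply: O_glb => s s0; rewrite -(pm_assoc H (ltW s0) phige0 (ltW t0)).
    exact: (pm_mono_l H phige0 (lbphi s s0) (ltW t0)).
  by rewrite h0 leNgt pt0.
rewrite leNgt; apply/negP => hlt; apply: nF; by apply/hx; rewrite (ltW pt0) hlt.
Qed.
Lemma one_to_four : O one = 0 ->
  F = [set t | 0 <= t] \/ exists phi, one < phi /\ F = [set t | 0 <= t < phi].
Proof.
move=> O1.
have Fone : F one by split => //; exact: pm_one_ge0 H.
set phi := ereal_sup F.
have ub x : F x -> x <= phi by move=> Fx; apply: ereal_sup_ubound.
have gt x : x < phi -> exists y, F y /\ x < y.
  by move=> /ereal_sup_gt[y Fy xy]; exists y.
have one0 := one_gt0.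
have onephi := ub one Fone.
have [Fphi|nFphi] := pselect (F phi).
  have [poo|poo] := leP +oo phi.
    left; apply/seteqP; split => x /=; first by case.
    move=> x0; apply: (@F_down x phi x0 _ Fphi); apply: le_trans (leey _) poo.
  exfalso.
  have phi0 : 0 < phi by apply: lt_le_trans onephi.
  have : phi <= O phi.
    apply: O_glb => s s0.
    have [soo|soo] := leP +oo s.
      have -> : s = +oo by apply/eqP; rewrite eq_le leey soo.
      rewrite -{1}(pm_one_l H (ltW phi0)).
      by apply: (pm_mono_l H (ltW one0) (leey _) (ltW phi0)).
    rewrite leNgt; apply/negP => hc.
    have [v [/andP[pv voo] hv]] := @R2 s phi phi (ltac:(by rewrite s0 soo)) (ltW phi0) poo hc.
    have v0 : 0 <= v by apply: ltW (lt_trans phi0 pv).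
    have nFv : ~ F v by move=> /ub; rewrite leNgt pv.
    have Ov0 := @O_ge0 v v0.
    have := @notF_gt (O v) phi Ov0 (@OnotF v v0 nFv) Fphi => hpO.
    have h1 : op s (O v) <= op s v by apply: (pm_mono_r H (ltW s0) Ov0 (@O_le v v0)).
    have h2 := @O_fix v s v0 s0.
    by have := lt_trans (lt_le_trans hpO (le_trans h2 h1)) hv; rewrite ltxx.
  by rewrite Fphi.2 leNgt phi0.
right; exists phi; split.
  rewrite lt_neqAle onephi andbT; apply/eqP => e; apply: nFphi; by rewrite -e.
apply/seteqP; split => x /=.
  move=> Fx; rewrite Fx.1 /= lt_neqAle ub // andbT.
  by apply/eqP => e; apply: nFphi; rewrite -e.
move=> /andP[x0 /gt[y [Fy xy]]]; exact: (@F_down x y x0 (ltW xy) Fy).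
Qed.
Lemma two_to_one : (exists t, 0 < t /\ O t = 0) -> O one = 0.
Proof.
move=> [t [t0 Ot]].
have one0 := one_gt0.
have c0 := @O_ge0 one (ltW one0).
have h : op (O one) t <= O t.
  apply: O_glb => s s0.
  rewrite -{2}(pm_one_l H (ltW t0)) -(pm_assoc H (ltW s0) (ltW one0) (ltW t0)).
  exact: (pm_mono_l H c0 (@O_lb s one s0) (ltW t0)).
have : op (O one) t = 0.
  apply/eqP; rewrite eq_le (pm_range H c0 (ltW t0)) andbT; by rewrite -Ot.
move=> /(pm_nozd H c0 (ltW t0)) [//|e]; by move: t0; rewrite e ltxx.
Qed.

Lemma three_to_one :
  (forall s t, 0 <= s <= one -> 0 <= t <= one -> op s t = op t s) -> O one = 0.
Proof.
move=> hc.
have one0 := one_gt0.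
apply: le0E; first exact: (@O_ge0 one (ltW one0)).
move=> r r0.
set s := Order.min one (r / 2)%:E.
have s0 : 0 < s by rewrite lt_min one0 lte_fin; lra.
have s1 : s <= one by rewrite ge_min lexx.
have sr : s < r%:E by rewrite gt_min lte_fin; apply/orP; right; lra.
apply: le_lt_trans sr.
apply: le_trans (@O_lb s one s0) _.
rewrite hc ?(pm_one_l H (ltW s0)) // ?lexx ?(ltW s0) ?(ltW one0) //.
Qed.
Lemma ivt (g : \bar R -> \bar R) (p q y : \bar R) :
  p <= q ->
  (forall u v, p <= u -> u <= v -> v <= q -> g u <= g v) ->
  (forall c y', p < c -> c <= q -> y' < g c -> exists u, u < c /\ p <= u /\ y' < g u) ->
  (forall c y', p <= c -> c < q -> g c < y' -> exists u, c < u /\ u <= q /\ g u < y') ->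
  g p <= y -> y <= g q -> exists c, p <= c <= q /\ g c = y.
Proof.
move=> pq mono Hl Hr gp gq.
set S := [set u | p <= u <= q /\ g u <= y].
set c := ereal_sup S.
have Sp : S p by rewrite /S /= lexx pq.
have pc : p <= c by apply: ereal_sup_ubound.
have cq : c <= q by apply: ge_ereal_sup => u [/andP[]].
exists c; rewrite pc cq; split => //.
apply/eqP; rewrite eq_le; apply/andP; split.
  have [e|pc'] := eqVneq p c; first by rewrite -e.
  have pc'' : p < c by rewrite lt_neqAle pc' pc.
  rewrite leNgt; apply/negP => hc.
  have [u [uc [pu yu]]] := Hl c y pc'' cq hc.
  have [u' [/andP[pu' u'q] gu'] uu'] := ereal_sup_gt uc.
  have := mono u u' pu (ltW uu') u'q.
  by move=> /(lt_le_trans yu) /(lt_le_trans)/(_ gu'); rewrite ltxx.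
have [e|cq'] := eqVneq c q; first by rewrite e.
have cq'' : c < q by rewrite lt_neqAle cq' cq.
rewrite leNgt; apply/negP => hc.
have [u [cu [uq gu]]] := Hr c y pc cq'' hc.
have Su : S u by rewrite /S /= uq (le_trans pc (ltW cu)) (ltW gu).
have := ereal_sup_ubound Su; rewrite -/c leNgt cu //.
Qed.
Lemma ivt_l a x : 0 < a -> O a = 0 -> 0 < x -> x <= op a a ->
  exists u, 0 < u <= a /\ op u a = x.
Proof.
move=> a0 Oa x0 xa.
have [p [p0 hp]] : exists p, 0 < p /\ op p a < x by apply: O_lt; rewrite Oa.
have pa : p < a.
  rewrite ltNge; apply/negP => ap.
  have := pm_mono_l H (ltW a0) ap (ltW a0).
  by move=> /(le_lt_trans)/(_ hp)/(lt_le_trans)/(_ xa); rewrite ltxx.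
have := @ivt (fun u => op u a) p a x (ltW pa) _ _ _ (ltW hp) xa.
case.
- move=> u v pu uv vq; apply: (pm_mono_l H) => //; last exact: ltW.
  exact: le_trans (ltW p0) pu.
- move=> c y' pc ca yc.
  have c0 : 0 < c by apply: lt_trans pc.
  have [u [/andP[u0 uc] [_ yu]]] := @L1 a c y' (ltW a0) c0 yc.
  exists (Order.max u p); rewrite gt_max uc pc le_max lexx orbT; split => //; split => //.
  apply: lt_le_trans yu _; apply: (pm_mono_l H (ltW u0) _ (ltW a0)).
  by rewrite le_max lexx.
- move=> c y' pc ca yc.
  have c0 : 0 < c by apply: lt_le_trans pc.
  have coo : c < +oo by apply: lt_le_trans ca (leey _).
  have [u [/andP[cu _] yu]] := @R1 a c y' (ltW a0) c0 coo yc.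
  exists (Order.min u a); rewrite lt_min cu ca ge_min lexx orbT; split => //; split => //.
  apply: le_lt_trans _ yu; apply: (pm_mono_l H _ _ (ltW a0)).
    by rewrite le_min (ltW (lt_trans c0 cu)) (ltW a0).
  by rewrite ge_min lexx.
- by move=> u [/andP[pu ua] hu]; exists u; rewrite (lt_le_trans p0 pu) ua.
Qed.
Lemma ivt_r a x : 0 < a < +oo -> 0 <= x <= op a a ->
  exists w, 0 <= w <= a /\ op a w = x.
Proof.
move=> /andP[a0 aoo] /andP[x0 xa].
have := @ivt (fun w => op a w) 0 a x (ltW a0) _ _ _ _ xa.
case.
- move=> u v pu uv vq; exact: (pm_mono_r H (ltW a0) pu uv).
- move=> c y' pc ca yc.
  have [v [/andP[v0 vc] [_ yv]]] := @L2 a c y' (ltac:(by rewrite a0 aoo)) pc yc.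
  by exists v; rewrite vc (ltW v0).
- move=> c y' pc ca yc.
  have coo : c < +oo by apply: lt_trans ca aoo.
  have [v [/andP[cv _] yv]] := @R2 a c y' (ltac:(by rewrite a0 aoo)) pc coo yc.
  exists (Order.min v a); rewrite lt_min cv ca ge_min lexx orbT; split => //; split => //.
  apply: le_lt_trans _ yv; apply: (pm_mono_r H (ltW a0)).
    by rewrite le_min (ltW (le_lt_trans pc cv)) (ltW a0).
  by rewrite ge_min lexx.
- by rewrite (pm_0r H (ltW a0)).
- by move=> w [hw e]; exists w.
Qed.
Lemma absR a x : 0 < a -> O a = 0 -> op a a = a -> 0 <= x <= a -> op x a = x.
Proof.
move=> a0 Oa aa /andP[x0 xa].
have [e|x0'] := eqVneq 0 x; first by rewrite -e (pm_0l H (ltW a0)).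
have xp : 0 < x by rewrite lt_neqAle x0' x0.
have [u [/andP[u0 ua] hu]] := @ivt_l a x a0 Oa xp (ltac:(by rewrite aa)).
by rewrite -hu (pm_assoc H (ltW u0) (ltW a0) (ltW a0)) aa.
Qed.

Lemma absL a x : 0 < a < +oo -> op a a = a -> 0 <= x <= a -> op a x = x.
Proof.
move=> aoo aa /andP[x0 xa].
have a0 : 0 <= a by case/andP: aoo => /ltW.
have [w [/andP[w0 wa] hw]] := @ivt_r a x aoo (ltac:(by rewrite x0 aa)).
by rewrite -hw -(pm_assoc H a0 a0 w0) aa.
Qed.
Lemma mono2 u v u' v' : 0 <= u -> u <= u' -> 0 <= v -> v <= v' -> op u v <= op u' v'.
Proof.
move=> u0 uu v0 vv; apply: le_trans (pm_mono_r H u0 v0 vv) _.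
exact: (pm_mono_l H u0 uu (le_trans v0 vv)).
Qed.

Section ND.
Hypothesis Hnd : O one = 0.

Lemma Fle x : 0 <= x <= one -> O x = 0.
Proof.
move=> /andP[x0 x1]; apply/eqP; rewrite eq_le O_ge0 // andbT -Hnd.
exact: O_mono.
Qed.

Lemma rid x : 0 <= x <= one -> op x one = x.
Proof. by apply: absR; [exact: one_gt0|exact: Hnd|exact: (pm_one_l H (pm_one_ge0 H))].
Qed.

Lemma root y : 0 < y < one -> exists z, y <= z < one /\ op z z = y.
Proof.
move=> /andP[y0 y1].
have one0 := one_gt0.
have mono : forall u v, y <= u -> u <= v -> v <= one -> op u u <= op v v.
  move=> u v yu uv _; have u0 := le_trans (ltW y0) yu.
  exact: mono2.
have := @ivt (fun z => op z z) y one y (ltW y1) mono _ _ _ _.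
case.
- move=> c y' yc c1 hc.
  have c0 : 0 < c by apply: lt_trans yc.
  have [u1 [/andP[u10 u1c] [u1oo h1]]] := @L1 c c y' (ltW c0) c0 hc.
  have [v [/andP[v0 vc] [_ h2]]] := @L2 u1 c y' (ltac:(by rewrite u10 u1oo)) c0 h1.
  exists (Order.max (Order.max u1 v) y).
  rewrite !gt_max u1c vc yc !le_max lexx !orbT; split => //; split => //.
  apply: lt_le_trans h2 _; apply: mono2; rewrite ?(ltW u10) ?(ltW v0) //.
    by rewrite !le_max lexx.
  by rewrite !le_max lexx orbT.
- move=> c y' yc c1 hc.
  have c0 : 0 < c by apply: lt_le_trans yc.
  have coo : c < +oo by apply: lt_le_trans c1 (leey _).
  have [v [/andP[cv _] h1]] := @R2 c c y' (ltac:(by rewrite c0 coo)) (ltW c0) coo hc.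
  have v0 : 0 <= v by apply: ltW (lt_trans c0 cv).
  have [u [/andP[cu _] h2]] := @R1 v c y' v0 c0 coo h1.
  exists (Order.min (Order.min u v) one).
  rewrite !lt_min cu cv c1 !ge_min lexx !orbT; split => //; split => //.
  apply: le_lt_trans _ h2; apply: mono2.
  + by rewrite !le_min (ltW (lt_trans c0 cu)) (ltW (lt_trans c0 cv)) (ltW one0).
  + by rewrite !ge_min lexx.
  + by rewrite !le_min (ltW (lt_trans c0 cu)) (ltW (lt_trans c0 cv)) (ltW one0).
  + by rewrite !ge_min lexx orbT.
- by apply: le_trans (pm_mono_r H (ltW y0) (ltW y0) (ltW y1)) _; rewrite rid // (ltW y0) (ltW y1).
- by rewrite (pm_one_l H (ltW one0)) (ltW y1).
- move=> z [/andP[yz z1] hz]; exists z; rewrite yz; split => //.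
  rewrite lt_neqAle z1 andbT; apply/eqP => e.
  by move: hz y1; rewrite e (pm_one_l H (ltW one0)) => ->; rewrite ltxx.
Qed.
Fixpoint pw (z : \bar R) (n : nat) : \bar R := if n is n'.+1 then op (pw z n') z else one.

Lemma pw_range z n : 0 <= z <= one -> 0 <= pw z n <= one.
Proof.
move=> /andP[z0 z1]; elim: n => [|n /andP[h0 h1]] /=; first by rewrite lexx ltW // one_gt0.
rewrite (pm_range H h0 z0) /=; apply: le_trans (pm_mono_r H h0 z0 z1) _.
by rewrite rid // h0 h1.
Qed.

Lemma pw_S z n : pw z n.+1 = op (pw z n) z.
Proof. by [].
Qed.
Lemma pw_add z m n : 0 <= z <= one -> pw z (m + n) = op (pw z m) (pw z n).
Proof.
move=> zr; have z0 : 0 <= z by case/andP: zr.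
elim: n => [|n IH]; first by rewrite addn0 /= rid //; exact: (@pw_range z m zr).
have := @pw_range z m zr => /andP[m0 _]; have := @pw_range z n zr => /andP[n0 _].
by rewrite addnS /= IH (pm_assoc H m0 n0 z0).
Qed.

Lemma pw_dec z n : 0 <= z <= one -> pw z n.+1 <= pw z n.
Proof.
move=> zr; have := @pw_range z n zr => /andP[n0 n1]; case/andP: zr => z0 z1.
rewrite /= -{2}(@rid (pw z n)) ?n0 ?n1 //; exact: (pm_mono_r H n0 z0 z1).
Qed.
Lemma pw_mono z m n : 0 <= z <= one -> (m <= n)%N -> pw z n <= pw z m.
Proof.
move=> zr /subnK <-; elim: (n - m)%N => [|k IH] //=.
by apply: le_trans (@pw_dec z _ zr) IH.
Qed.

Lemma pw1 z : 0 <= z -> pw z 1 = z.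
Proof. by move=> z0; rewrite /= (pm_one_l H z0).
Qed.
Lemma pw_sq w z n : 0 <= w <= one -> op w w = z -> pw w (2 * n) = pw z n.
Proof.
move=> wr hz; elim: n => [|n IH] //.
have wz : 0 <= w by case/andP: wr.
rewrite mulnS addnC pw_add // IH /= (pm_one_l H wz) hz //.
Qed.
Lemma find_step (g : nat -> \bar R) (s : \bar R) N :
  s <= g 0%N -> g N < s -> exists m, s <= g m /\ g m.+1 < s.
Proof.
move=> h0; elim: N => [|N IH] hN.
  by have := le_lt_trans h0 hN; rewrite ltxx.
have [sN|Ns] := leP s (g N); first by exists N.
exact: IH.
Qed.
Lemma comm_main s t : 0 < s -> s <= t -> t < one -> op s t = op t s.
Proof.
move=> s0 st t1.
have one0 := one_gt0.
have t0 : 0 < t by apply: lt_le_trans st.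
have tr : 0 <= t <= one by rewrite (ltW t0) (ltW t1).
have [f hf] : exists f : \bar R -> \bar R, forall y, 0 < y < one -> y <= f y < one /\ op (f y) (f y) = y.
  have := @choice (\bar R) (\bar R) (fun y z => 0 < y < one -> y <= z < one /\ op z z = y).
  case.
    move=> y; have [hy|hy] := pselect (0 < y < one).
      by have [z hz] := @root y hy; exists z.
    by exists y => /hy.
  by move=> f' hf'; exists f'.
set z := fun k => iter k f t.
have zb : forall k, t <= z k < one.
  elim => [|k IH]; first by rewrite /z /= lexx t1.
  have := hf (z k) (ltac:(by rewrite (lt_le_trans t0 (proj1 (andP IH))) (proj2 (andP IH)))).
  by case=> /andP[h1 h2] _; rewrite /z /= -/(z k) h2 (le_trans (proj1 (andP IH)) h1).
have zsq : forall k, op (z k.+1) (z k.+1) = z k.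
  move=> k; have /andP[h1 h2] := zb k.
  by have [_ ] := hf (z k) (ltac:(by rewrite (lt_le_trans t0 h1) h2)).
have zr : forall k, 0 <= z k <= one.
  by move=> k; have /andP[h1 h2] := zb k; rewrite (le_trans (ltW t0) h1) (ltW h2).
have zpw : forall k n, pw (z k) (2 ^ k * n) = pw t n.
  elim => [|k IH] n; first by rewrite expn0 mul1n.
  by rewrite expnS -mulnA (@pw_sq (z k.+1) (z k)) ?zr ?zsq.
have zt : forall k, pw (z k) (2 ^ k) = t.
  by move=> k; rewrite -[X in pw _ X]muln1 zpw pw1 // ltW.
set L := ereal_sup (range z).
have zL : forall k, z k <= L by move=> k; apply: ereal_sup_ubound; exists k.
have tL : t <= L by apply: le_trans (zL 0%N); rewrite /z /= lexx.
have L0 : 0 < L by apply: lt_le_trans tL.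
have L1' : L <= one by apply: ge_ereal_sup => _ [k _ <-]; case/andP: (zr k).
have LL : op L L = L.
  apply/eqP; rewrite eq_le; apply/andP; split; last first.
    apply: ge_ereal_sup => _ [k _ <-]; rewrite -zsq.
    by apply: mono2; rewrite ?zL //; case/andP: (zr k.+1).
  rewrite leNgt; apply/negP => hc.
  have [u1 [/andP[u10 u1c] [u1oo h1]]] := @L1 L L L (ltW L0) L0 hc.
  have [v [/andP[v0 vc] [_ h2]]] := @L2 u1 L L (ltac:(by rewrite u10 u1oo)) L0 h1.
  have [_ [k _ <-] wk] := @ereal_sup_gt _ (range z) (Order.max u1 v) (ltac:(by rewrite gt_max u1c vc)).
  have /andP[zk0 zk1] := zr k.
  have h3 : op u1 v <= op (z k) (z k).
    apply: mono2; rewrite ?(ltW u10) ?(ltW v0) //.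
      by apply: le_trans (ltW wk); rewrite le_max lexx.
    by apply: le_trans (ltW wk); rewrite le_max lexx orbT.
  have h4 : op (z k) (z k) <= z k.
    by rewrite -{3}(@rid (z k)) ?zk0 ?zk1 //; exact: (pm_mono_r H zk0 zk0 zk1).
  have := le_trans h3 h4.
  by move=> /(lt_le_trans h2) /(lt_le_trans)/(_ (zL k)); rewrite ltxx.
have OL : O L = 0 by apply: Fle; rewrite (ltW L0) L1'.
have final : forall x y, 0 < x -> x <= t ->
    (forall k, exists W, 0 <= W /\ x <= W /\ op W (z k) <= y) -> x <= y.
  move=> x y x0 xt hW; rewrite leNgt; apply/negP => yx.
  have xoo : x < +oo by apply: le_lt_trans xt (lt_le_trans t1 (leey _)).
  have hxL : y < op x L by rewrite (@absR L x L0 OL LL) ?(ltW x0) ?(le_trans xt tL).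
  have [v [/andP[v0 vL] [_ hv]]] := @L2 x L y (ltac:(by rewrite x0 xoo)) L0 hxL.
  have [_ [k _ <-] vk] := @ereal_sup_gt _ (range z) v vL.
  have [W [W0 [xW hWk]]] := hW k.
  have : op x v <= op W (z k) by apply: mono2; rewrite ?(ltW x0) ?(ltW v0) ?(ltW vk).
  by move=> /(lt_le_trans hv) /(lt_le_trans)/(_ hWk); rewrite ltxx.
set L' := ereal_inf (range (fun j => pw t j.+1)).
have L'lb : forall j, L' <= pw t j.+1 by move=> j; apply: ereal_inf_lbound; exists j.
have L't : L' <= t by have := L'lb 0%N; rewrite pw1 // ltW.
have [sL|Ls] := leP s L'.
  have L'0 : 0 < L' by apply: lt_le_trans sL.
  have L'oo : L' < +oo by apply: le_lt_trans L't (lt_le_trans t1 (leey _)).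
  have L'r : 0 <= L' <= one by rewrite (ltW L'0) (le_trans L't (ltW t1)).
  have L'L' : op L' L' = L'.
    apply/eqP; rewrite eq_le; apply/andP; split.
      by rewrite -{3}(@rid L' L'r); apply: (pm_mono_r H (ltW L'0) (ltW L'0)); case/andP: L'r.
    rewrite leNgt; apply/negP => hc.
    have [v [/andP[Lv _] hv]] := @R2 L' L' L' (ltac:(by rewrite L'0 L'oo)) (ltW L'0) L'oo hc.
    have [u [/andP[Lu _] hu]] := @R1 v L' L' (ltW (lt_trans L'0 Lv)) L'0 L'oo hv.
    have [_ [j _ <-] hj] := @ereal_inf_lt _ (range (fun j => pw t j.+1)) u Lu.
    have [_ [i _ <-] hi] := @ereal_inf_lt _ (range (fun j => pw t j.+1)) v Lv.
    have := L'lb (j.+1 + i)%N.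
    rewrite -addnS pw_add // => hji.
    have /andP[pj0 _] := @pw_range t j.+1 tr.
    have /andP[pi0 _] := @pw_range t i.+1 tr.
    have := @mono2 _ _ _ _ pj0 (ltW hj) pi0 (ltW hi).
    by move=> /(le_lt_trans)/(_ hu)/(le_lt_trans hji); rewrite ltxx.
  have OL' : O L' = 0 by apply: Fle.
  have sr : 0 <= s <= L' by rewrite (ltW s0) sL.
  have e1 := @absR L' s L'0 OL' L'L' sr.
  have e2 := @absL L' s (ltac:(by rewrite L'0 L'oo)) L'L' sr.
  have s1 : 0 <= s <= one by rewrite (ltW s0) (le_trans st (ltW t1)).
  have -> : op s t = s.
    apply/eqP; rewrite eq_le; apply/andP; split.
      by rewrite -{2}(@rid s s1); apply: (pm_mono_r H (ltW s0) (ltW t0)); case/andP: tr.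
    by rewrite -{1}e1; apply: (pm_mono_r H (ltW s0) (ltW L'0)).
  apply/esym/eqP; rewrite eq_le; apply/andP; split.
    by rewrite -{2}(pm_one_l H (ltW s0)); apply: (pm_mono_l H (ltW t0)) => //; [case/andP: tr|exact: ltW].
  by rewrite -{1}e2; apply: (pm_mono_l H (ltW L'0) L't (ltW s0)).
have [_ [j0 _ <-] hj0] := @ereal_inf_lt _ (range (fun j => pw t j.+1)) s Ls.
have p0 := @pos_mul s t s0 t0.
have q0 := @pos_mul t s t0 s0.
have s1 : 0 <= s <= one by rewrite (ltW s0) (le_trans st (ltW t1)).
have pt : op s t <= t.
  by rewrite -{2}(pm_one_l H (ltW t0)); apply: (pm_mono_l H (ltW s0) _ (ltW t0)); case/andP: s1.
have qt : op t s <= t.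
  by rewrite -{2}(@rid t tr); apply: (pm_mono_r H (ltW t0) (ltW s0)); case/andP: s1.
have key : forall k, exists W, 0 <= W /\ op s t <= W /\ op t s <= W /\
    op W (z k) <= op s t /\ op W (z k) <= op t s.
  move=> k.
  have h0 : s <= pw (z k) 0 by rewrite /=; case/andP: s1.
  have hN : pw (z k) (2 ^ k * j0.+1) < s by rewrite zpw.
  have [m [hm1 hm2]] := @find_step (pw (z k)) s _ h0 hN.
  exists (pw (z k) (m + 2 ^ k)).
  have zk := zr k; have /andP[zk0 _] := zk.
  have /andP[pm0 _] := @pw_range (z k) m zk.
  have /andP[pm10 _] := @pw_range (z k) m.+1 zk.
  have /andP[pmk0 _] := @pw_range (z k) (m + 2 ^ k) zk.
  have eW : pw (z k) (m + 2 ^ k) = op (pw (z k) m) t by rewrite pw_add // zt.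
  have eW' : pw (z k) (m + 2 ^ k) = op t (pw (z k) m) by rewrite addnC pw_add // zt.
  have eWz : op (pw (z k) (m + 2 ^ k)) (z k) = op (pw (z k) m.+1) t.
    by rewrite -pw_S -addSn pw_add // zt.
  have eWz' : op (pw (z k) (m + 2 ^ k)) (z k) = op t (pw (z k) m.+1).
    by rewrite -pw_S -addSn addnC pw_add // zt.
  split => //.
  split; first by rewrite eW; apply: (pm_mono_l H (ltW s0) hm1 (ltW t0)).
  split; first by rewrite eW'; apply: (pm_mono_r H (ltW t0) (ltW s0) hm1).
  split; first by rewrite eWz; apply: (pm_mono_l H pm10 (ltW hm2) (ltW t0)).
  by rewrite eWz'; apply: (pm_mono_r H (ltW t0) pm10 (ltW hm2)).
apply/eqP; rewrite eq_le; apply/andP; split.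
  apply: final => // k; have [W [W0 [h1 [h2 [h3 h4]]]]] := key k.
  by exists W.
apply: final => // k; have [W [W0 [h1 [h2 [h3 h4]]]]] := key k.
by exists W.
Qed.
Lemma comm_all s t : 0 <= s <= one -> 0 <= t <= one -> op s t = op t s.
Proof.
have gen : forall s t, 0 <= s <= one -> 0 <= t <= one -> s <= t -> op s t = op t s.
  move=> a b /andP[a0 a1] /andP[b0 b1] ab.
  have [e|a0'] := eqVneq 0 a; first by rewrite -e (pm_0l H b0) (pm_0r H b0).
  have ap : 0 < a by rewrite lt_neqAle a0' a0.
  have [e|b1'] := eqVneq b one.
    by rewrite e rid ?a0 ?a1 // (pm_one_l H a0).
  apply: comm_main => //; by rewrite lt_neqAle b1' b1.
move=> hs ht; have [st|ts] := leP s t; first exact: gen.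
by apply/esym/gen => //; exact: ltW.
Qed.
End ND.


End PM.

Theorem theorem2p8 (R : realType) (op : \bar R -> \bar R -> \bar R) (one : \bar R) :
  is_pseudo_mult op one ->
  [<-> (* (1) non-degenerate *) Ofun op one = 0;
       (* (2) *) exists t, 0 < t /\ Ofun op t = 0;
       (* (3) ([0,one], op) commutative *)
         forall s t, 0 <= s <= one -> 0 <= t <= one -> op s t = op t s;
       (* (4) *) odot_finite op = [set t | 0 <= t] \/
         exists phi, one < phi /\ odot_finite op = [set t | 0 <= t < phi]]
  /\ (forall phi, odot_finite op = [set t | 0 <= t < phi] ->
        [/\ Ofun op phi = phi,
            (forall t, 0 < t <= phi -> op t phi = phi /\ op phi t = phi) &
            op phi phi = phi]).
Proof.
move=> H; split; last exact: (@moreover_part R op one H).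
tfae.
- by move=> h; exists one; split => //; exact: (@one_gt0 R op one H).
- by move=> h; apply: (@comm_all R op one H (@two_to_one R op one H h)).
- by move=> h; apply: (@one_to_four R op one H (@three_to_one R op one H h)).
- move=> h.
  have : odot_finite op one.
    case: h => [hF|[phi [hphi hF]]]; rewrite hF /=.
      exact: pm_one_ge0 H.
    by rewrite hphi (pm_one_ge0 H).
  by case.
Qed.
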